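(* $\pi(e_{n,1}^{(n)})=\pi(z)$ and $\pi(f_{n,1}^{(n)})=\pi(H_0)$.
   Context: Let $\mathfrak g=Q(n)$ with even basis $e_{i,j}$, odd basis $f_{i,j}$, $z=\sum_ie_{i,i}$, $H_0=\sum_{i=1}^{n}(-1)^{i-1}f_{i,i}$. Let $\chi(x)=\mathrm{otr}(xE)$ with $E=\sum_{i=1}^{n-1}f_{i,i+1}$, $\mathfrak m$ spanned by $e_{i,j},f_{i,j}$ ($i>j$), $\chi(e_{i+1,i})=1$ and $\chi=0$ on the other basis vectors of $\mathfrak m$, $I_\chi$ the left ideal of $U(\mathfrak g)$ generated by $a-\chi(a)$ ($a\in\mathfrak m$), and $\pi:U(\mathfrak g)\to U(\mathfrak g)/I_\chi$ the projection. Sergeev's elements: $e_{i,j}^{(1)}=e_{i,j}$, $f_{i,j}^{(1)}=f_{i,j}$, $e_{i,j}^{(m)}=\sum_k e_{i,k}e_{k,j}^{(m-1)}+(-1)^{m+1}\sum_k f_{i,k}f_{k,j}^{(m-1)}$, $f_{i,j}^{(m)}=\sum_k e_{i,k}f_{k,j}^{(m-1)}+(-1)^{m+1}\sum_k f_{i,k}e_{k,j}^{(m-1)}$. *)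

(* Defs.v *)
From HB Require Import structures.
From mathcomp Require Import all_boot all_order all_algebra.
Set Implicit Arguments. Unset Strict Implicit. Unset Printing Implicit Defensive.
Import GRing.Theory Num.Theory.
Local Open Scope ring_scope.

(* Basis of Q(n) (indices 1..n, as in the paper):
   (false,i,j) stands for the even vector e_{i,j},
   (true ,i,j) stands for the odd  vector f_{i,j}. *)
Definition gen := (bool * nat * nat)%type.
Definition ge (i j : nat) : gen := (false, i, j).
Definition gf (i j : nat) : gen := (true, i, j).
Definition parity (x : gen) : bool := x.1.1.

Definition gens (n : nat) : seq gen :=
  flatten [seq [seq (b, i, j) | i <- iota 1 n, j <- iota 1 n] | b <- [:: false; true]].

Section FreeAlg.
Variable K : numClosedFieldType.

(* Elements of the tensor algebra T(g) = free associative algebra on the basis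
   of g, written as formal finite linear combinations of words; two such
   expressions are equal iff all their coefficients agree (nceq). *)
Definition ncpoly := seq (K * seq gen).

Definition ncadd (p q : ncpoly) : ncpoly := p ++ q.
Definition ncscale (c : K) (p : ncpoly) : ncpoly := [seq (c * t.1, t.2) | t <- p].
Definition ncopp (p : ncpoly) : ncpoly := ncscale (-1) p.
Definition ncsub (p q : ncpoly) : ncpoly := ncadd p (ncopp q).
Definition ncmul (p q : ncpoly) : ncpoly :=
  [seq (t.1 * s.1, t.2 ++ s.2) | t <- p, s <- q].
Definition ncword (w : seq gen) : ncpoly := [:: (1, w)].
Definition ncgen (x : gen) : ncpoly := ncword [:: x].
Definition ncconst (c : K) : ncpoly := [:: (c, [::])].
Definition nccoef (p : ncpoly) (w : seq gen) : K := \sum_(t <- p | t.2 == w) t.1.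
Definition nceq (p q : ncpoly) : Prop := forall w, nccoef p w = nccoef q w.

Definition delta (a b : nat) : K := (a == b)%:R.
Definition sgn (b : bool) : K := (-1) ^+ b.

(* Super bracket of basis vectors of Q(n) (realized inside gl(n|n) by
   e_{ij} = E_{ij}+E_{n+i,n+j}, f_{ij} = E_{i,n+j}+E_{n+i,j}):
   [x_{ij}, y_{kl}] = d_{jk} (xy)_{il} - (-1)^{|x||y|} d_{li} (xy)_{kj},
   i.e. [e,e'], [e,f], [f,e] are the usual commutators and
   [f_{ij}, f_{kl}] = d_{jk} e_{il} + d_{li} e_{kj}. *)
Definition sbracket (x y : gen) : ncpoly :=
  let: (p1, i, j) := x in let: (p2, k, l) := y in
  ncadd (ncscale (delta j k) (ncgen (addb p1 p2, i, l)))
        (ncscale (- sgn (p1 && p2) * delta l i) (ncgen (addb p1 p2, k, j))).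

Definition urel (x y : gen) : ncpoly :=
  ncsub (ncsub (ncmul (ncgen x) (ncgen y))
               (ncscale (sgn (parity x && parity y)) (ncmul (ncgen y) (ncgen x))))
        (sbracket x y).

Definition Jgens (n : nat) : seq ncpoly :=
  [seq urel x y | x <- gens n, y <- gens n].

Definition chi (x : gen) : K :=
  let: (b, i, j) := x in if b then 0 else delta i j.+1.

Definition mgens (n : nat) : seq gen := [seq x <- gens n | (x.2 < x.1.2)%N].

Definition Mgens (n : nat) : seq ncpoly :=
  [seq ncsub (ncgen x) (ncconst (chi x)) | x <- mgens n].

(* p lies in the left ideal of T(g) generated by the two-sided ideal of the
   relations of U(g) and by the a - chi(a), a in m; i.e. the image of p in
   U(g) lies in I_chi. *)
Definition inLeftIdeal (n : nat) (p : ncpoly) : Prop :=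
  exists (A : seq (K * seq gen * ncpoly * seq gen)) (B : seq (K * seq gen * ncpoly)),
    all (fun t => t.1.2 \in Jgens n) A /\
    all (fun t => t.2 \in Mgens n) B /\
    nceq p (ncadd
      (\big[ncadd/[::]]_(t <- A)
          ncscale t.1.1.1 (ncmul (ncmul (ncword t.1.1.2) t.1.2) (ncword t.2)))
      (\big[ncadd/[::]]_(t <- B) ncscale t.1.1 (ncmul (ncword t.1.2) t.2))).

Definition piEq (n : nat) (p q : ncpoly) : Prop := inLeftIdeal n (ncsub p q).

Definition ncsum (n : nat) (F : nat -> ncpoly) : ncpoly :=
  \big[ncadd/[::]]_(1 <= k < n.+1) F k.

(* serg n m b i j = e_{ij}^{(m+1)} if b = false, f_{ij}^{(m+1)} if b = true. *)
Fixpoint serg (n m : nat) (b : bool) (i j : nat) : ncpoly :=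
  match m with
  | 0 => ncgen (b, i, j)
  | m'.+1 =>
      ncadd (ncsum n (fun k => ncmul (ncgen (ge i k)) (serg n m' b k j)))
            (ncscale (sgn (odd (m'.+2).+1))
               (ncsum n (fun k => ncmul (ncgen (gf i k)) (serg n m' (~~ b) k j))))
  end.

Definition sergeev (n m : nat) (b : bool) (i j : nat) : ncpoly := serg n m.-1 b i j.

Definition zel (n : nat) : ncpoly := ncsum n (fun i => ncgen (ge i i)).
Definition H0 (n : nat) : ncpoly :=
  ncsum n (fun i => ncscale (sgn (odd i.-1)) (ncgen (gf i i))).

End FreeAlg.

(* Main.v *)
Require Import Defs.
From mathcomp Require Import all_boot all_order all_algebra.
From HB Require Import structures.
From mathcomp Require Import boolp.
Set Implicit Arguments. Unset Strict Implicit. Unset Printing Implicit Defensive.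
Import GRing.Theory.
Local Open Scope ring_scope.

Lemma tri (K : nmodType) (F : nat -> nat -> K) N :
  \sum_(0 <= k < N.+1) \sum_(0 <= l < k.+1) F l (k - l)%N =
  \sum_(0 <= l < N.+1) \sum_(0 <= j < (N - l).+1) F l j.
Proof.
elim: N => [|N IH]; first by rewrite !big_nat1.
rewrite big_nat_recr //= IH [RHS]big_nat_recr //= subnn big_nat1.
rewrite [\sum_(0 <= l < N.+2) _]big_nat_recr //= subnn addrA; congr (_ + _).
rewrite -big_split /=; apply: eq_big_nat => l /andP [_ hl].
by rewrite subSn // [RHS]big_nat_recr.
Qed.

Definition ser (K : numClosedFieldType) := seq gen -> K.
HB.instance Definition _ (K : numClosedFieldType) := Choice.on (ser K).

Section Ser.
Variable K : numClosedFieldType.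
Local Notation R := (ser K).
Definition szero : R := fun _ => 0.
Definition sopp (f : R) : R := fun w => - f w.
Definition sadd (f g : R) : R := fun w => f w + g w.
Lemma saddA : associative sadd.
Proof. by move=> f g h; apply: funext => w; rewrite /sadd addrA. Qed.
Lemma saddC : commutative sadd.
Proof. by move=> f g; apply: funext => w; rewrite /sadd addrC. Qed.
Lemma sadd0 : left_id szero sadd.
Proof. by move=> f; apply: funext => w; rewrite /sadd /szero add0r. Qed.
Lemma saddN : left_inverse szero sopp sadd.
Proof. by move=> f; apply: funext => w; rewrite /sadd /szero /sopp addNr. Qed.

Definition smul (f g : R) : R := fun w =>
  \sum_(0 <= k < (size w).+1) f (take k w) * g (drop k w).
Definition sone : R := fun w => (w == [::])%:R.

Lemma smulE f g w : smul f g w =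
  \sum_(0 <= k < (size w).+1) f (take k w) * g (drop k w).
Proof. by []. Qed.

Lemma smulA : associative smul.
Proof.
move=> f g h; apply: funext => w; symmetry; rewrite !smulE.
transitivity (\sum_(0 <= k < (size w).+1) \sum_(0 <= l < k.+1)
   (fun l j => f (take l w) * (g (take j (drop l w)) * h (drop j (drop l w)))) l (k - l)%N).
  apply: eq_big_nat => k /andP [_ hk].
  have hk' : (k <= size w)%N by rewrite -ltnS.
  rewrite smulE size_takel // mulr_suml.
  apply: eq_big_nat => l /andP [_ hl].
  have hl' : (l <= k)%N by rewrite -ltnS.
  rewrite take_takel // -mulrA drop_drop subnK //.
  by rewrite take_drop subnK.
rewrite (tri (fun l j => f (take l w) * (g (take j (drop l w)) * h (drop j (drop l w))))).
apply: eq_big_nat => l /andP [_ hl].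
by rewrite smulE mulr_sumr size_drop.
Qed.

Lemma smul1 : left_id sone smul.
Proof.
move=> f; apply: funext => w; rewrite smulE /sone big_ltn //= take0 mul1r drop0.
rewrite big_nat_cond big1 ?addr0 // => k /andP [/andP [hk hk2] _].
have hk' : (k <= size w)%N by rewrite -ltnS.
suff -> : (take k w == [::]) = false by rewrite mul0r.
by rewrite -size_eq0 size_takel //; case: k hk {hk2 hk'}.
Qed.

Lemma smulr1 : right_id sone smul.
Proof.
move=> f; apply: funext => w; rewrite smulE /sone big_nat_recr //= take_size drop_size.
rewrite eqxx mulr1 big_nat_cond big1 ?add0r // => k /andP [/andP [_ hk] _].
suff -> : (drop k w == [::]) = false by rewrite mulr0.
by rewrite -size_eq0 size_drop subn_eq0 leqNgt hk.
Qed.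

Lemma smulDl : left_distributive smul sadd.
Proof.
move=> f g h; apply: funext => w; rewrite /sadd !smulE -big_split /=.
by apply: eq_bigr => k _; rewrite mulrDl.
Qed.

Lemma smulDr : right_distributive smul sadd.
Proof.
move=> f g h; apply: funext => w; rewrite /sadd !smulE -big_split /=.
by apply: eq_bigr => k _; rewrite mulrDr.
Qed.
End Ser.

HB.instance Definition _ (K : numClosedFieldType) :=
  GRing.isZmodule.Build (ser K) (@saddA K) (@saddC K) (@sadd0 K) (@saddN K).
HB.instance Definition _ (K : numClosedFieldType) :=
  GRing.Zmodule_isPzRing.Build (ser K) (@smulA K) (@smul1 K) (@smulr1 K)
    (@smulDl K) (@smulDr K).

Section Phi.
Variable K : numClosedFieldType.
Local Notation R := (ser K).
Implicit Types p q : ncpoly K.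

Definition phi p : R := fun w => nccoef p w.
Definition cst (c : K) : R := fun w => (w == [::])%:R * c.
Definition W (u : seq gen) : R := phi (ncword K u).

Lemma phiE p w : phi p w = nccoef p w. Proof. by []. Qed.
Lemma addE (f g : R) w : (f + g) w = f w + g w. Proof. by []. Qed.
Lemma oppE (f : R) w : (- f) w = - f w. Proof. by []. Qed.
Lemma zeroE w : (0 : R) w = 0. Proof. by []. Qed.
Lemma mulE (f g : R) w : (f * g) w =
  \sum_(0 <= k < (size w).+1) f (take k w) * g (drop k w).
Proof. by []. Qed.

Lemma phi_add p q : phi (ncadd p q) = phi p + phi q.
Proof. by apply: funext => w; rewrite addE !phiE /nccoef /ncadd big_cat. Qed.
Lemma phi_nil : phi [::] = 0.
Proof. by apply: funext => w; rewrite phiE /nccoef big_nil. Qed.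

Lemma cst_mull c (f : R) : cst c * f = fun w => c * f w.
Proof.
apply: funext => w; rewrite mulE big_ltn //= take0 drop0 /cst eqxx mul1r.
rewrite big_nat_cond big1 ?addr0 // => k /andP [/andP [hk hk2] _].
have hk' : (k <= size w)%N by rewrite -ltnS.
suff -> : (take k w == [::]) = false by rewrite mul0r mul0r.
by rewrite -size_eq0 size_takel //; case: k hk {hk2 hk'}.
Qed.
Lemma cst_mulr c (f : R) : f * cst c = fun w => c * f w.
Proof.
apply: funext => w; rewrite mulE big_nat_recr //= take_size drop_size /cst.
rewrite eqxx mul1r mulrC big_nat_cond big1 ?add0r // => k /andP [/andP [_ hk] _].
suff -> : (drop k w == [::]) = false by rewrite mul0r mulr0.
by rewrite -size_eq0 size_drop subn_eq0 leqNgt hk.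
Qed.
Lemma cstC c (f : R) : cst c * f = f * cst c.
Proof. by rewrite cst_mull cst_mulr. Qed.
Lemma cst1 : cst 1 = 1.
Proof. by apply: funext => w; rewrite /cst mulr1. Qed.
Lemma cstM a b : cst (a * b) = cst a * cst b.
Proof. by rewrite cst_mull; apply: funext => w; rewrite /cst mulrCA. Qed.
Lemma cstD a b : cst (a + b) = cst a + cst b.
Proof. by apply: funext => w; rewrite addE /cst mulrDr. Qed.
Lemma cst0 : cst 0 = 0.
Proof. by apply: funext => w; rewrite /cst mulr0. Qed.
Lemma cstN a : cst (- a) = - cst a.
Proof. by apply: funext => w; rewrite oppE /cst mulrN. Qed.
Lemma cst_sign (b : bool) : cst ((-1) ^+ b) = (-1) ^+ b.
Proof. by case: b; rewrite ?expr0 ?expr1 ?cstN cst1. Qed.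
Lemma cst_nat (b : bool) : cst (b%:R) = b%:R.
Proof. by case: b; rewrite ?cst1 ?cst0. Qed.

Lemma phi_scale c p : phi (ncscale c p) = cst c * phi p.
Proof.
rewrite cst_mull; apply: funext => w; rewrite !phiE /nccoef /ncscale big_map /=.
by rewrite mulr_sumr.
Qed.

Lemma sum_take (a : seq gen) w (F : nat -> K) :
  \sum_(0 <= k < (size w).+1) (a == take k w)%:R * F k =
  (take (size a) w == a)%:R * F (size a).
Proof.
case h: (take (size a) w == a).
  have ha : (size a <= size w)%N.
    by move/eqP: h => h; rewrite -h size_take; case: ltnP => // /ltnW.
  rewrite (bigD1_seq (size a)) ?mem_index_iota ?iota_uniq ?ltnS ?ha //=.
  rewrite (eqP h) eqxx big1_seq ?addr0 // => k /andP [hk2 hk1].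
  case e: (a == take k w); last by rewrite mul0r.
  have hk : (k <= size w)%N by move: hk1; rewrite mem_index_iota ltnS.
  by move/eqP: e hk2 => ->; rewrite size_takel // eqxx.
rewrite mul0r big_nat_cond big1 // => k /andP [/andP [_ hk] _].
case e: (a == take k w); last by rewrite mul0r.
have hk' : (k <= size w)%N by rewrite -ltnS.
by move/eqP: e h => ->; rewrite size_takel // eqxx.
Qed.

Lemma cat_eq (a b w : seq gen) :
  (a ++ b == w) = (take (size a) w == a) && (b == drop (size a) w).
Proof.
apply/eqP/andP => [<- | [/eqP h1 /eqP h2]].
  by rewrite take_size_cat // drop_size_cat // !eqxx.
by rewrite -h1 h2 cat_take_drop.
Qed.

Lemma phi_mul p q : phi (ncmul p q) = phi p * phi q.
Proof.
apply: funext => w; rewrite mulE.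
elim: p => [|t p IH].
  by rewrite phiE /nccoef /ncmul /= big_nil big1 // => k _; rewrite phiE /nccoef big_nil mul0r.
rewrite phiE /nccoef /ncmul /= big_cat /= -[X in _ + X]/(phi (ncmul p q) w) IH.
rewrite [X in _ = X](eq_bigr (fun k => (t.2 == take k w)%:R * (t.1 * phi q (drop k w))
    + phi p (take k w) * phi q (drop k w))); last first.
  move=> k _; rewrite phiE /nccoef big_cons -/(nccoef p (take k w)) -phiE.
  by case: eqP => _; rewrite ?mul1r ?mul0r ?add0r // mulrDl.
rewrite big_split /=; congr (_ + _).
rewrite sum_take big_map big_mkcond /= phiE /nccoef mulr_sumr mulr_sumr big_mkcond /=.
rewrite [RHS]big_mkcond; apply: eq_bigr => s _; rewrite cat_eq.
by case: (take _ _ == _); case: (s.2 == _) => /=; rewrite ?mul1r ?mul0r ?mulr0.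
Qed.
End Phi.

Section Ideal.
Variable K : numClosedFieldType.
Local Notation R := (ser K).
Implicit Types p q : ncpoly K.
Local Notation phi := (@phi K).
Local Notation W := (@W K).
Local Notation cst := (@cst K).

Lemma phi_big (I : Type) (r : seq I) (G : I -> ncpoly K) :
  phi (\big[@ncadd K/[::]]_(t <- r) G t) = \sum_(t <- r) phi (G t).
Proof. exact: (big_morph phi (@phi_add K) (@phi_nil K)). Qed.

Lemma phi_const c : phi (ncconst c) = cst c.
Proof.
apply: funext => w; rewrite phiE /nccoef /ncconst big_cons big_nil /cst addr0.
by rewrite eq_sym; case: eqP; rewrite ?mul1r ?mul0r.
Qed.

Lemma W_nil : W [::] = 1.
Proof. by rewrite /W (_ : ncword K [::] = ncconst 1) // phi_const cst1. Qed.

Lemma W_cat u v : W (u ++ v) = W u * W v.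
Proof. by rewrite /W -phi_mul /ncmul /ncword /= mulr1. Qed.

Lemma phi_single c u : phi [:: (c, u)] = cst c * W u.
Proof. by rewrite /W -phi_scale /ncscale /ncword /= mulr1. Qed.

Lemma phi_list p : phi p = \sum_(t <- p) cst t.1 * W t.2.
Proof.
elim: p => [|t p IH]; first by rewrite phi_nil big_nil.
by rewrite big_cons -IH -phi_single -phi_add; case: t.
Qed.

Definition Poly (F : R) := exists p, F = phi p.
Lemma Poly_phi p : Poly (phi p). Proof. by exists p. Qed.
Lemma PolyD F G : Poly F -> Poly G -> Poly (F + G).
Proof. by move=> [p ->] [q ->]; exists (ncadd p q); rewrite phi_add. Qed.
Lemma PolyM F G : Poly F -> Poly G -> Poly (F * G).
Proof. by move=> [p ->] [q ->]; exists (ncmul p q); rewrite phi_mul. Qed.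
Lemma Poly_cst c : Poly (cst c).
Proof. by exists (ncconst c); rewrite phi_const. Qed.
Lemma Poly0 : Poly 0. Proof. by exists [::]; rewrite phi_nil. Qed.
Lemma Poly1 : Poly 1. Proof. by rewrite -cst1; apply: Poly_cst. Qed.
Lemma PolyN F : Poly F -> Poly (- F).
Proof.
move=> hF; rewrite -mulN1r -cst1 -cstN; apply: PolyM => //; exact: Poly_cst.
Qed.
Lemma PolyB F G : Poly F -> Poly G -> Poly (F - G).
Proof. by move=> hF hG; apply: PolyD => //; apply: PolyN. Qed.
Lemma Poly_sum (I : Type) (r : seq I) (P : pred I) (G : I -> R) :
  (forall i, P i -> Poly (G i)) -> Poly (\sum_(i <- r | P i) G i).
Proof. by move=> h; apply: big_ind => //; [exact: Poly0 | exact: PolyD]. Qed.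
Lemma Poly_sign (b : bool) : Poly ((-1) ^+ b).
Proof. by rewrite -cst_sign; apply: Poly_cst. Qed.
Lemma Poly_nat (b : bool) : Poly (b%:R).
Proof. by rewrite -cst_nat; apply: Poly_cst. Qed.

Variable n : nat.

Definition Jrel (F : R) := exists A : seq (K * seq gen * ncpoly K * seq gen),
  all (fun t => t.1.2 \in Jgens K n) A /\
  F = \sum_(t <- A) cst t.1.1.1 * (W t.1.1.2 * phi t.1.2 * W t.2).

Definition Irel (F : R) := exists (A : seq (K * seq gen * ncpoly K * seq gen))
  (B : seq (K * seq gen * ncpoly K)),
  all (fun t => t.1.2 \in Jgens K n) A /\ all (fun t => t.2 \in Mgens K n) B /\
  F = \sum_(t <- A) cst t.1.1.1 * (W t.1.1.2 * phi t.1.2 * W t.2) +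
      \sum_(t <- B) cst t.1.1 * (W t.1.2 * phi t.2).

Lemma Irel_link p : Irel (phi p) -> inLeftIdeal n p.
Proof.
move=> [A [B [hA [hB e]]]]; exists A, B; split=> //; split=> // w.
rewrite -!phiE e; congr (_ w); rewrite phi_add !phi_big.
by apply: f_equal2; apply: eq_bigr => t _; rewrite phi_scale !phi_mul.
Qed.

Lemma Jrel0 : Jrel 0.
Proof. by exists [::]; rewrite big_nil. Qed.
Lemma JrelD F G : Jrel F -> Jrel G -> Jrel (F + G).
Proof.
move=> [A [hA ->]] [B [hB ->]]; exists (A ++ B).
by rewrite all_cat hA hB big_cat.
Qed.
Lemma Jrel_sum (I : Type) (r : seq I) (P : pred I) (G : I -> R) :
  (forall i, P i -> Jrel (G i)) -> Jrel (\sum_(i <- r | P i) G i).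
Proof. by move=> h; apply: big_ind => //; [exact: Jrel0 | exact: JrelD]. Qed.
Lemma Jrel_cst c F : Jrel F -> Jrel (cst c * F).
Proof.
move=> [A [hA ->]]; exists [seq (c * t.1.1.1, t.1.1.2, t.1.2, t.2) | t <- A].
rewrite all_map big_map mulr_sumr; split; first by apply: sub_all hA => t.
by apply: eq_bigr => t _ /=; rewrite cstM mulrA.
Qed.
Lemma Jrel_Wl u F : Jrel F -> Jrel (W u * F).
Proof.
move=> [A [hA ->]]; exists [seq (t.1.1.1, u ++ t.1.1.2, t.1.2, t.2) | t <- A].
rewrite all_map big_map mulr_sumr; split; first by apply: sub_all hA => t.
by apply: eq_bigr => t _ /=; rewrite W_cat mulrA -cstC -!mulrA.
Qed.
Lemma Jrel_Wr u F : Jrel F -> Jrel (F * W u).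
Proof.
move=> [A [hA ->]]; exists [seq (t.1.1.1, t.1.1.2, t.1.2, t.2 ++ u) | t <- A].
rewrite all_map big_map mulr_suml; split; first by apply: sub_all hA => t.
by apply: eq_bigr => t _ /=; rewrite W_cat !mulrA.
Qed.
Lemma Jrel_Pl F G : Poly G -> Jrel F -> Jrel (G * F).
Proof.
move=> [p ->] hF; rewrite phi_list mulr_suml; apply: Jrel_sum => t _.
by rewrite -mulrA; apply/Jrel_cst/Jrel_Wl.
Qed.
Lemma Jrel_Pr F G : Poly G -> Jrel F -> Jrel (F * G).
Proof.
move=> [p ->] hF; rewrite phi_list mulr_sumr; apply: Jrel_sum => t _.
by rewrite cstC mulrA -cstC; apply/Jrel_cst/Jrel_Wr.
Qed.
Lemma JrelN F : Jrel F -> Jrel (- F).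
Proof. by move=> h; rewrite -mulN1r; apply: Jrel_Pl => //; apply/PolyN/Poly1. Qed.
Lemma Jrel_gen x y : x \in gens n -> y \in gens n -> Jrel (phi (urel K x y)).
Proof.
move=> hx hy; exists [:: (1, [::], urel K x y, [::])]; split.
  by rewrite /= andbT /Jgens; apply: allpairs_f.
by rewrite big_cons big_nil addr0 /= cst1 W_nil mul1r mul1r mulr1.
Qed.

Lemma Irel0 : Irel 0.
Proof. by exists [::], [::]; rewrite !big_nil addr0. Qed.
Lemma IrelD F G : Irel F -> Irel G -> Irel (F + G).
Proof.
move=> [A [B [hA [hB ->]]]] [A' [B' [hA' [hB' ->]]]]; exists (A ++ A'), (B ++ B').
by rewrite !all_cat hA hB hA' hB' !big_cat addrACA.
Qed.
Lemma Irel_sum (I : Type) (r : seq I) (P : pred I) (G : I -> R) :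
  (forall i, P i -> Irel (G i)) -> Irel (\sum_(i <- r | P i) G i).
Proof. by move=> h; apply: big_ind => //; [exact: Irel0 | exact: IrelD]. Qed.
Lemma Irel_cst c F : Irel F -> Irel (cst c * F).
Proof.
move=> [A [B [hA [hB ->]]]].
exists [seq (c * t.1.1.1, t.1.1.2, t.1.2, t.2) | t <- A],
  [seq (c * t.1.1, t.1.2, t.2) | t <- B].
rewrite !all_map !big_map mulrDr !mulr_sumr; split; first by apply: sub_all hA => t.
split; first by apply: sub_all hB => t.
by congr (_ + _); apply: eq_bigr => t _ /=; rewrite cstM mulrA.
Qed.
Lemma Irel_Wl u F : Irel F -> Irel (W u * F).
Proof.
move=> [A [B [hA [hB ->]]]].
exists [seq (t.1.1.1, u ++ t.1.1.2, t.1.2, t.2) | t <- A],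
  [seq (t.1.1, u ++ t.1.2, t.2) | t <- B].
rewrite !all_map !big_map mulrDr !mulr_sumr; split; first by apply: sub_all hA => t.
split; first by apply: sub_all hB => t.
by congr (_ + _); apply: eq_bigr => t _ /=; rewrite W_cat mulrA -cstC -!mulrA.
Qed.
Lemma Irel_Pl F G : Poly G -> Irel F -> Irel (G * F).
Proof.
move=> [p ->] hF; rewrite phi_list mulr_suml; apply: Irel_sum => t _.
by rewrite -mulrA; apply/Irel_cst/Irel_Wl.
Qed.
Lemma IrelN F : Irel F -> Irel (- F).
Proof. by move=> h; rewrite -mulN1r; apply: Irel_Pl => //; apply/PolyN/Poly1. Qed.
Lemma Jrel_Irel F : Jrel F -> Irel F.
Proof. by move=> [A [hA ->]]; exists A, [::]; rewrite big_nil addr0. Qed.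
Lemma Irel_m x : x \in mgens n -> Irel (phi (ncgen K x) - cst (chi K x)).
Proof.
move=> hx; exists [::], [:: (1, [::], ncsub (ncgen K x) (ncconst (chi K x)))]; split=> //.
split; first by rewrite /= andbT /Mgens; apply: map_f.
rewrite big_nil add0r big_cons big_nil addr0 /= cst1 W_nil !mul1r.
by rewrite /ncsub phi_add /ncopp phi_scale phi_const cstN cst1 mulN1r.
Qed.
End Ideal.

Section Math.
Variable K : numClosedFieldType.
Local Notation R := (ser K).
Local Notation phi := (@phi K).
Local Notation W := (@W K).
Local Notation cst := (@cst K).
Local Notation Poly := (@Poly K).
Variable n : nat.
Local Notation Jrel := (@Jrel K n).
Local Notation Irel := (@Irel K n).

Definition eqJ (F G : R) := Jrel (F - G).
Definition eqI (F G : R) := Irel (F - G).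
Local Infix "=J" := eqJ (at level 70).
Local Infix "=I" := eqI (at level 70).

Lemma eqJ_refl F : F =J F.
Proof. by rewrite /eqJ subrr; apply: Jrel0. Qed.
Lemma eqJ_eq F G : F = G -> F =J G.
Proof. by move=> ->; apply: eqJ_refl. Qed.
Lemma eqJ_sym F G : F =J G -> G =J F.
Proof. by rewrite /eqJ => /JrelN; rewrite opprB. Qed.
Lemma eqJ_trans F G H : F =J G -> G =J H -> F =J H.
Proof. by rewrite /eqJ => h1 h2; have := JrelD h1 h2; rewrite addrA subrK. Qed.
Lemma eqJ_add F1 F2 G1 G2 : F1 =J G1 -> F2 =J G2 -> F1 + F2 =J G1 + G2.
Proof. by rewrite /eqJ => h1 h2; have := JrelD h1 h2; rewrite opprD addrACA. Qed.
Lemma eqJ_lmul P F G : Poly P -> F =J G -> P * F =J P * G.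
Proof. by rewrite /eqJ -mulrBr => hP h; apply: Jrel_Pl. Qed.
Lemma eqJ_rmul P F G : Poly P -> F =J G -> F * P =J G * P.
Proof. by rewrite /eqJ -mulrBl => hP h; apply: Jrel_Pr. Qed.
Lemma eqJ_sum (I : Type) (r : seq I) (P : pred I) (F G : I -> R) :
  (forall i, P i -> F i =J G i) ->
  \sum_(i <- r | P i) F i =J \sum_(i <- r | P i) G i.
Proof. by move=> h; rewrite /eqJ -sumrB; apply: Jrel_sum. Qed.

Lemma eqI_refl F : F =I F.
Proof. by rewrite /eqI subrr; apply: Irel0. Qed.
Lemma eqI_eq F G : F = G -> F =I G.
Proof. by move=> ->; apply: eqI_refl. Qed.
Lemma eqI_sym F G : F =I G -> G =I F.
Proof. by rewrite /eqI => /IrelN; rewrite opprB. Qed.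
Lemma eqI_trans F G H : F =I G -> G =I H -> F =I H.
Proof. by rewrite /eqI => h1 h2; have := IrelD h1 h2; rewrite addrA subrK. Qed.
Lemma eqI_add F1 F2 G1 G2 : F1 =I G1 -> F2 =I G2 -> F1 + F2 =I G1 + G2.
Proof. by rewrite /eqI => h1 h2; have := IrelD h1 h2; rewrite opprD addrACA. Qed.
Lemma eqI_lmul P F G : Poly P -> F =I G -> P * F =I P * G.
Proof. by rewrite /eqI -mulrBr => hP h; apply: Irel_Pl. Qed.
Lemma eqI_sum (I : Type) (r : seq I) (P : pred I) (F G : I -> R) :
  (forall i, P i -> F i =I G i) ->
  \sum_(i <- r | P i) F i =I \sum_(i <- r | P i) G i.
Proof. by move=> h; rewrite /eqI -sumrB; apply: Irel_sum. Qed.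
Lemma eqJ_eqI F G : F =J G -> F =I G.
Proof. exact: Jrel_Irel. Qed.

Definition X b i j : R := phi (ncgen K (b, i, j)).
Definition T m b i j : R := phi (serg K n m b i j).
Definition dl (i j : nat) : R := (i == j)%:R.
Definition inr i := (1 <= i <= n)%N.

Lemma PolyX b i j : Poly (X b i j). Proof. exact: Poly_phi. Qed.
Lemma PolyT m b i j : Poly (T m b i j). Proof. exact: Poly_phi. Qed.
Lemma Polydl i j : Poly (dl i j). Proof. exact: Poly_nat. Qed.

Lemma gens_mem b i j : inr i -> inr j -> (b, i, j) \in gens n.
Proof.
move=> hi hj; rewrite /gens /= cats0 mem_cat.
have hi' : i \in iota 1 n by rewrite mem_iota add1n ltnS.
have hj' : j \in iota 1 n by rewrite mem_iota add1n ltnS.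
by case: b; [apply/orP; right | apply/orP; left]; apply: (allpairs_f (fun i0 j0 => (_, i0, j0))).
Qed.

Lemma T0 b i j : T 0 b i j = X b i j. Proof. by []. Qed.

Lemma Trec m b i j : T m.+1 b i j =
  \sum_(1 <= k < n.+1) X false i k * T m b k j +
  (-1) ^+ (odd m.+1) * \sum_(1 <= k < n.+1) X true i k * T m (~~ b) k j.
Proof.
rewrite /T /= phi_add phi_scale /ncsum !phi_big /sgn cst_sign /= negbK.
by congr (_ + _ * _); apply: eq_bigr => k _; rewrite phi_mul.
Qed.

Lemma phi_sub p q : phi (ncsub p q) = phi p - phi q.
Proof. by rewrite /ncsub phi_add /ncopp phi_scale cstN cst1 mulN1r. Qed.

Lemma base a p q b c d : inr p -> inr q -> inr c -> inr d ->
  X a p q * X b c d =J (-1) ^+ (a && b) * (X b c d * X a p q) +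
   (dl q c * X (a (+) b) p d - (-1) ^+ (a && b) * dl d p * X (a (+) b) c q).
Proof.
move=> hp hq hc hd; have := @Jrel_gen K n _ _ (gens_mem a hp hq) (gens_mem b hc hd).
rewrite /eqJ /urel !phi_sub phi_scale !phi_mul /sbracket phi_add !phi_scale.
rewrite cst_sign cstM cstN cst_sign /delta !cst_nat /X /dl /parity /=.
by move=> h; rewrite opprD addrA; move: h; rewrite !mulNr.
Qed.

Lemma sum_dl p (F : nat -> R) : inr p ->
  \sum_(1 <= k < n.+1) dl k p * F k = F p.
Proof.
move=> hp; rewrite (bigD1_seq p) ?mem_index_iota ?iota_uniq //=.
rewrite /dl eqxx mul1r big1_seq ?addr0 // => k /andP [hk _].
by rewrite (negbTE hk) mul0r.
Qed.
Lemma sum_dlr p (F : nat -> R) : inr p ->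
  \sum_(1 <= k < n.+1) dl p k * F k = F p.
Proof.
move=> hp; rewrite -(sum_dl F hp); apply: eq_bigr => k _; by rewrite /dl eq_sym.
Qed.

Lemma sgC (b : bool) (x : R) : (-1) ^+ b * x = x * (-1) ^+ b.
Proof. exact/esym/commr_sign. Qed.
Lemma dlC i j (x : R) : dl i j * x = x * dl i j.
Proof. by rewrite /dl; apply/esym/commr_nat. Qed.
Lemma sgK (b : bool) : (-1) ^+ b * (-1) ^+ b = 1 :> R.
Proof. by case: b; rewrite ?expr0 ?expr1 ?mulr1 ?mulrNN ?mulr1. Qed.

Definition Comm m := forall a p q b c d, inr p -> inr q -> inr c -> inr d ->
  X a p q * T m b c d =J (-1) ^+ (a && b) * (T m b c d * X a p q) +
   ((-1) ^+ (a && odd m) * dl q c * T m (a (+) b) p d -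
    (-1) ^+ (a && b) * dl d p * T m (a (+) b) c q).

Lemma Comm0 : Comm 0.
Proof. by move=> a p q b c d hp hq hc hd; rewrite !T0 andbF expr0 mul1r; apply: base. Qed.

Lemma eqJ_sum_nat (F G : nat -> R) :
  (forall k, inr k -> F k =J G k) ->
  \sum_(1 <= k < n.+1) F k =J \sum_(1 <= k < n.+1) G k.
Proof.
move=> h; rewrite big_seq_cond [X in _ =J X]big_seq_cond; apply: eqJ_sum => k.
by rewrite mem_index_iota andbT => hk; apply: h.
Qed.
Lemma eqI_sum_nat (F G : nat -> R) :
  (forall k, inr k -> F k =I G k) ->
  \sum_(1 <= k < n.+1) F k =I \sum_(1 <= k < n.+1) G k.
Proof.
move=> h; rewrite big_seq_cond [X in _ =I X]big_seq_cond; apply: eqI_sum => k.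
by rewrite mem_index_iota andbT => hk; apply: h.
Qed.

Lemma sg_split (a b e : bool) :
  (-1) ^+ (a && e) * (-1) ^+ (a && (b (+) e)) = (-1) ^+ (a && b) :> R.
Proof. by case: a; case: b; case: e; rewrite /= ?expr0 ?expr1 ?mulr1 ?mul1r ?mulrNN ?mulr1. Qed.

Lemma sgA (b : bool) (x y : R) : x * ((-1) ^+ b * y) = (-1) ^+ b * (x * y).
Proof. by rewrite mulrA -sgC mulrA. Qed.
Lemma dlA i j (x y : R) : x * (dl i j * y) = dl i j * (x * y).
Proof. by rewrite mulrA -dlC mulrA. Qed.

Lemma L1 m (IH : Comm m) a p q b c d e : inr p -> inr q -> inr c -> inr d ->
 X a p q * (\sum_(1 <= k < n.+1) X e c k * T m (b (+) e) k d) =J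
 (-1) ^+ (a && b) * ((\sum_(1 <= k < n.+1) X e c k * T m (b (+) e) k d) * X a p q) +
 (dl q c * (\sum_(1 <= k < n.+1) X (a (+) e) p k * T m (b (+) e) k d)
  - (-1) ^+ (a && e) * (X (a (+) e) c q * T m (b (+) e) p d)
  + (-1) ^+ (a && e) * (-1) ^+ (a && odd m) * (X e c q * T m (a (+) (b (+) e)) p d)
  - (-1) ^+ (a && b) * dl d p *
     (\sum_(1 <= k < n.+1) X e c k * T m (a (+) (b (+) e)) k q)).
Proof.
move=> hp hq hc hd.
have h1 : X a p q * (\sum_(1 <= k < n.+1) X e c k * T m (b (+) e) k d) =J
  \sum_(1 <= k < n.+1) ((-1) ^+ (a && e) * X e c k) * (X a p q * T m (b (+) e) k d) +
  \sum_(1 <= k < n.+1) (dl q c * X (a (+) e) p k -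
      (-1) ^+ (a && e) * dl k p * X (a (+) e) c q) * T m (b (+) e) k d.
  rewrite -big_split mulr_sumr /=; apply: eqJ_sum_nat => k hk.
  rewrite mulrA; apply: (eqJ_trans (eqJ_rmul (PolyT _ _ _ _) (base a e hp hq hc hk))).
  by apply: eqJ_eq; rewrite mulrDl !mulrA.
apply: (eqJ_trans h1).
have h2 : \sum_(1 <= k < n.+1) ((-1) ^+ (a && e) * X e c k) * (X a p q * T m (b (+) e) k d)
  =J \sum_(1 <= k < n.+1) ((-1) ^+ (a && e) * X e c k) *
      ((-1) ^+ (a && (b (+) e)) * (T m (b (+) e) k d * X a p q) +
        ((-1) ^+ (a && odd m) * dl q k * T m (a (+) (b (+) e)) p d -
         (-1) ^+ (a && (b (+) e)) * dl d p * T m (a (+) (b (+) e)) k q)).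
  apply: eqJ_sum_nat => k hk; apply: eqJ_lmul; first by apply: PolyM; [apply: Poly_sign | apply: PolyX].
  exact: IH.
apply: (eqJ_trans (eqJ_add h2 (eqJ_refl _))); apply: eqJ_eq.
under eq_bigr do rewrite mulrDr mulrBr.
rewrite big_split sumrB /=.
have E1 : \sum_(1 <= k < n.+1) (-1) ^+ (a && e) * X e c k *
      ((-1) ^+ (a && (b (+) e)) * (T m (b (+) e) k d * X a p q)) =
    (-1) ^+ (a && b) * ((\sum_(1 <= k < n.+1) X e c k * T m (b (+) e) k d) * X a p q).
  rewrite mulr_suml mulr_sumr; apply: eq_bigr => k _.
  by rewrite -mulrA sgA mulrA sg_split [X e c k * _]mulrA.
have E2 : \sum_(1 <= k < n.+1) (-1) ^+ (a && e) * X e c k *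
      ((-1) ^+ (a && odd m) * dl q k * T m (a (+) (b (+) e)) p d) =
    (-1) ^+ (a && e) * (-1) ^+ (a && odd m) * (X e c q * T m (a (+) (b (+) e)) p d).
  rewrite -(sum_dlr (fun k => (-1) ^+ (a && e) * (-1) ^+ (a && odd m) *
     (X e c k * T m (a (+) (b (+) e)) p d)) hq).
  apply: eq_bigr => k _.
  rewrite -!mulrA [X e c k * (_ ^+ _ * _)]sgA [X e c k * (dl _ _ * _)]dlA.
  by rewrite [RHS]sgA [in RHS]sgA.
have E3 : \sum_(1 <= k < n.+1) (-1) ^+ (a && e) * X e c k *
      ((-1) ^+ (a && (b (+) e)) * dl d p * T m (a (+) (b (+) e)) k q) =
    (-1) ^+ (a && b) * dl d p *
     (\sum_(1 <= k < n.+1) X e c k * T m (a (+) (b (+) e)) k q).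
  rewrite mulr_sumr; apply: eq_bigr => k _.
  by rewrite -!mulrA sgA dlA !mulrA sg_split.
have E4 : \sum_(1 <= k < n.+1)
     (dl q c * X (a (+) e) p k - (-1) ^+ (a && e) * dl k p * X (a (+) e) c q) *
     T m (b (+) e) k d =
   dl q c * \sum_(1 <= k < n.+1) X (a (+) e) p k * T m (b (+) e) k d -
   (-1) ^+ (a && e) * (X (a (+) e) c q * T m (b (+) e) p d).
  under eq_bigr do rewrite mulrBl.
  rewrite sumrB mulr_sumr; congr (_ - _).
    by apply: eq_bigr => k _; rewrite mulrA.
  rewrite -(sum_dl (fun k => (-1) ^+ (a && e) * (X (a (+) e) c q * T m (b (+) e) k d)) hp).
  by apply: eq_bigr => k _; rewrite -!mulrA sgA.
rewrite E1 E2 E3 E4 -addrA; congr (_ + _).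
by rewrite addrC !addrA.
Qed.

Lemma sum_perm (M : zmodType) (l : seq M) (s s' : seq nat) :
  perm_eq s s' -> \sum_(i <- s) nth 0 l i = \sum_(i <- s') nth 0 l i.
Proof. exact: perm_big. Qed.

Lemma rearr4 (x0 y0 z0 w0 x1 y1 z1 w1 t : R) :
  (x0 - y0 + z0 - w0) + t * (x1 - y1 + z1 - w1) =
  (x0 + t * x1) + ((z0 - y0) + t * (z1 - y1)) - (w0 + t * w1).
Proof.
rewrite !mulrDr !mulrN opprD !addrA.
have := @sum_perm _ [:: x0; -y0; z0; -w0; t * x1; -(t * y1); t * z1; -(t * w1)]
  [:: 0; 1; 2; 3; 4; 5; 6; 7]%N [:: 0; 4; 2; 1; 6; 5; 3; 7]%N isT.
by rewrite !big_cons big_nil /= !addr0 !addrA.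
Qed.

Lemma caseT (o dd S1 S0 P0 P1 : R) : o * o = 1 -> o * dd = dd * o ->
  dd * S1 - o * (dd * S0) + (o * P0 - P1 - o * (- (o * P1) + P0)) =
  - (o * dd * (S0 - o * S1)).
Proof.
move=> oo od.
have e1 : o * (- (o * P1) + P0) = - P1 + o * P0.
  by rewrite mulrDr mulrN mulrA oo mul1r.
have e2 : o * P0 - P1 - (- P1 + o * P0) = 0.
  by rewrite opprD opprK addrA subrK subrr.
have e3 : o * dd * (S0 - o * S1) = o * (dd * S0) - dd * S1.
  rewrite mulrBr -mulrA; congr (_ - _).
  by rewrite od -mulrA [o * (o * S1)]mulrA oo mul1r.
by rewrite e1 e2 addr0 e3 opprB addrC.
Qed.

Lemma CommS m : Comm m -> Comm m.+1.
Proof.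
move=> IH a p q b c d hp hq hc hd.
have L0 := L1 IH a b false hp hq hc hd.
have L1' := L1 IH a b true hp hq hc hd.
rewrite !addbF andbF expr0 !mul1r in L0.
rewrite !addbT in L1'.
rewrite Trec mulrDr sgA.
apply: (eqJ_trans (eqJ_add L0 (eqJ_lmul (@Poly_sign K (odd m.+1)) L1'))) => /=.
apply: eqJ_eq.
rewrite mulrDr addrACA; congr (_ + _).
  by rewrite mulrDl mulrDr sgA -mulrA.
rewrite rearr4 Trec Trec /= addbN.
have hE : (-1) ^+ (a && b) * dl d p *
   \sum_(1 <= k < n.+1) X false c k * T m (a (+) b) k q +
   (-1) ^+ (~~ odd m) *
   ((-1) ^+ (a && b) * dl d p *
    \sum_(1 <= k < n.+1) X true c k * T m (~~ (a (+) b)) k q) =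
  (-1) ^+ (a && b) * dl d p *
  (\sum_(1 <= k < n.+1) X false c k * T m (a (+) b) k q +
   (-1) ^+ (~~ odd m) *
   \sum_(1 <= k < n.+1) X true c k * T m (~~ (a (+) b)) k q).
  by rewrite [in RHS]mulrDr [in RHS]sgA.
rewrite hE; congr (_ - _); case: a {hE L0 L1'} => /=.
  rewrite expr1 signrN negbK !mulN1r !mulNr !opprK.
  apply: caseT; first exact: sgK.
  by rewrite dlC.
rewrite !expr0 !mul1r subrr subrr mulr0 addr0.
by rewrite addr0 mulrDr [in RHS]sgA.
Qed.

Lemma Comm_all m : Comm m.
Proof. by elim: m => [|m IH]; [exact: Comm0 | exact: CommS]. Qed.

Lemma sum_assoc_l (A : nat -> R) (G : nat -> nat -> R) :
  \sum_(1 <= l < n.+1) A l * \sum_(1 <= k < n.+1) G l k =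
  \sum_(1 <= k < n.+1) \sum_(1 <= l < n.+1) A l * G l k.
Proof.
rewrite -exchange_big /=; apply: eq_bigr => l _; by rewrite mulr_sumr.
Qed.

Lemma TrecSum m c i (Y : nat -> R) :
  \sum_(1 <= k < n.+1) T m.+1 c i k * Y k =
  \sum_(1 <= k < n.+1) \sum_(1 <= l < n.+1) X false i l * (T m c l k * Y k) +
  (-1) ^+ (odd m.+1) *
  \sum_(1 <= k < n.+1) \sum_(1 <= l < n.+1) X true i l * (T m (~~ c) l k * Y k).
Proof.
under eq_bigr do rewrite Trec mulrDl.
rewrite big_split /= mulr_sumr; congr (_ + _); apply: eq_bigr => k _.
  by rewrite mulr_suml; apply: eq_bigr => l _; rewrite mulrA.
rewrite -mulrA mulr_suml.
by apply: f_equal; apply: eq_bigr => l _; rewrite mulrA.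
Qed.

Lemma rearr2 (a b x y : R) : a - b + (x - y) = (a - y) - (b - x).
Proof.
by rewrite opprB addrACA [RHS]addrACA [- y + _]addrC.
Qed.

Lemma Tright m b i j : T m.+1 b i j =
  \sum_(1 <= k < n.+1) T m false i k * X b k j -
  \sum_(1 <= k < n.+1) T m true i k * X (~~ b) k j.
Proof.
elim: m b i j => [|m IH] b i j; first by rewrite Trec /= expr1 mulN1r.
rewrite Trec.
under eq_bigr do rewrite IH mulrBr.
under [in X in _ + X]eq_bigr do rewrite IH mulrBr.
rewrite !sumrB !sum_assoc_l !TrecSum /= negbK signrN mulrBr rearr2 !mulNr.
by rewrite negbK.
Qed.

Lemma eqI_sum_rng lo hi (F G : nat -> R) :
  (forall k, (lo <= k < hi)%N -> F k =I G k) ->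
  \sum_(lo <= k < hi) F k =I \sum_(lo <= k < hi) G k.
Proof.
move=> h; rewrite big_seq_cond [X in _ =I X]big_seq_cond; apply: eqI_sum => k.
by rewrite mem_index_iota andbT => hk; apply: h.
Qed.
Lemma eqI_opp F G : F =I G -> - F =I - G.
Proof. by rewrite /eqI -opprD => h; apply: IrelN. Qed.
Lemma eqI_sub F1 F2 G1 G2 : F1 =I G1 -> F2 =I G2 -> F1 - F2 =I G1 - G2.
Proof. by move=> h1 h2; apply: eqI_add h1 (eqI_opp h2). Qed.

Lemma mgens_mem b i j : inr i -> inr j -> (j < i)%N -> (b, i, j) \in mgens n.
Proof. by move=> hi hj hij; rewrite /mgens mem_filter /= hij gens_mem. Qed.

Lemma piX b i j : inr i -> inr j -> (j < i)%N ->
  X b i j =I ((~~ b) && (i == j.+1))%:R.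
Proof.
move=> hi hj hij; have := @Irel_m K n _ (mgens_mem b hi hj hij).
rewrite /eqI /X /chi; case: b => /=; first by rewrite cst0.
by rewrite /delta cst_nat.
Qed.

Definition Zst m := forall b i j, inr i -> inr j -> (j + m < i)%N ->
  T m b i j =I ((~~ b) && (i == (j + m).+1))%:R.

Lemma Part m (Hz : Zst m) c e i j : inr i -> inr j -> (j + m < i)%N ->
  \sum_(1 <= k < n.+1) T m c i k * X e k j =I
  \sum_(1 <= k < j.+1) ((-1) ^+ (e && c) * (X e k j * ((~~ c) && (i == (k + m).+1))%:R)
      + T m (e (+) c) i j) + (~~ e)%:R * T m c i j.+1.
Proof.
move=> hi hj hm.
have hin : (i <= n)%N by case/andP: hi.
have hji : (j < i)%N by apply: leq_ltn_trans hm; apply: leq_addr.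
have hjn : (j < n)%N by apply: leq_trans hin.
rewrite (@big_cat_nat _ _ _ j.+1) //=; last by rewrite ltnW.
apply: eqI_add.
  apply: eqI_sum_rng => k /andP [hk1 hk2].
  have hk : inr k by rewrite /inr hk1 /= (leq_trans _ (ltnW hjn)) // -ltnS.
  have hkj : (k <= j)%N by rewrite -ltnS.
  have hkm : (k + m < i)%N by apply: leq_ltn_trans hm; rewrite leq_add2r.
  have h := Comm_all m e c hk hj hi hk.
  rewrite /dl (ltn_eqF hji) eqxx mulr0 mul0r mulr1 sub0r in h.
  have E : T m c i k * X e k j = (-1) ^+ (e && c) * ((-1) ^+ (e && c) *
      (T m c i k * X e k j) + - ((-1) ^+ (e && c) * T m (e (+) c) i j))
      + T m (e (+) c) i j.
    by rewrite mulrDr mulrN !mulrA sgK !mul1r subrK.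
  apply: eqI_trans.
    apply: eqJ_eqI; apply: (eqJ_trans (eqJ_eq E)).
    apply: eqJ_add (eqJ_refl _); apply: (eqJ_lmul (@Poly_sign K _)); exact: eqJ_sym h.
  apply: eqI_add (eqI_refl _); apply: (eqI_lmul (@Poly_sign K _)).
  by apply: eqI_lmul; [apply: PolyX | apply: Hz].
apply: eqI_trans.
  apply: eqI_sum_rng => k /andP [hk1 hk2].
  have hk : inr k by apply/andP; split; [apply: leq_trans hk1 | rewrite -ltnS].
  by apply: eqI_lmul; [apply: PolyT | apply: piX hk hj hk1].
apply: eqI_eq; rewrite big_ltn ?ltnS // eqxx andbT.
rewrite big_nat_cond big1 ?addr0; first exact: commr_nat.
move=> k /andP [/andP [hk _] _].
by rewrite (gtn_eqF hk) andbF mulr0.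
Qed.

Lemma Step m (Hz : Zst m) b i j : inr i -> inr j -> (j + m < i)%N ->
  T m.+1 b i j =I (-1) ^+ b * T m b i j.+1 +
    \sum_(1 <= k < j.+1) (i == (k + m).+1)%:R * X b k j.
Proof.
move=> hi hj hm; rewrite Tright.
apply: eqI_trans; first exact: eqI_sub (Part Hz false b hi hj hm) (Part Hz true (~~ b) hi hj hm).
apply: eqI_eq; rewrite /= andbF andbT addbF addbT negbK.
under eq_bigr do rewrite expr0 mul1r.
under [X in _ - (X + _)]eq_bigr do rewrite mulr0 mulr0 add0r.
rewrite big_split /= opprD addrACA addrK addrC.
congr (_ + _); last by apply: eq_bigr => k _; apply: commr_nat.
by case: b => /=; rewrite ?mul0r ?mul1r ?subr0 ?sub0r ?expr0 ?expr1 ?mulN1r ?mul1r.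
Qed.

Lemma Zall m : Zst m.
Proof.
elim: m => [|m IH] b i j hi hj hm.
  by rewrite T0 addn0; apply: piX => //; rewrite -(addn0 j).
have hm' : (j + m < i)%N by apply: ltn_trans hm; rewrite addnS.
apply: (eqI_trans (Step IH b hi hj hm')).
have hin : (i <= n)%N by case/andP: hi.
have hj1 : inr j.+1.
  apply/andP; split => //; apply: leq_trans hin; apply: leq_ltn_trans hm.
  exact: leq_addr.
have hm1 : (j.+1 + m < i)%N by rewrite addSnnS.
apply: eqI_trans.
  apply: eqI_add (eqI_refl _); apply: (eqI_lmul (@Poly_sign K _)); exact: IH hi hj1 hm1.
apply: eqI_eq.
rewrite big_nat_cond big1 ?addr0; last first.
  move=> k /andP [/andP [_ hk] _]; suff -> : (i == (k + m).+1) = false by rewrite mul0r.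
  apply: gtn_eqF; apply: leq_ltn_trans hm; rewrite addnS ltnS leq_add2r -ltnS //.
by rewrite addSnnS; case: b; rewrite /= ?expr0 ?expr1 ?mul1r ?mulN1r ?oppr0.
Qed.

Definition Dst m := forall b j, inr j -> inr (j + m) ->
  T m b (j + m) j =I
  \sum_(0 <= t < m.+1) (-1) ^+ (b && odd t) * X b (j + t) (j + t).
Lemma Dall m : Dst m.
Proof.
elim: m => [|m IH] b j hj hjm.
  by apply: eqI_eq; rewrite big_nat1 T0 /= addn0 andbF expr0 mul1r.
have hm : (j + m < j + m.+1)%N by rewrite addnS.
apply: (eqI_trans (Step (@Zall m) b hjm hj hm)).
have hin : (j + m.+1 <= n)%N by case/andP: hjm.
have hj1 : inr j.+1.
  apply/andP; split => //; apply: leq_trans hin.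
  by rewrite addnS ltnS leq_addr.
have hjm1 : inr (j.+1 + m) by rewrite addSnnS.
rewrite -addSnnS.
apply: eqI_trans.
  apply: eqI_add (eqI_refl _); apply: (eqI_lmul (@Poly_sign K _)); exact: IH hj1 hjm1.
apply: eqI_eq.
have hj0 : (1 <= j)%N by case/andP: hj.
have HS : \sum_(1 <= k < j.+1) ((j.+1 + m)%N == (k + m).+1)%:R * X b k j = X b j j.
  rewrite big_nat_recr //= addSn eqxx mul1r big_nat_cond big1 ?add0r //.
  move=> k /andP [/andP [_ hk] _].
  suff -> : ((j + m).+1 == (k + m).+1) = false by rewrite mul0r.
  by rewrite eqSS eqn_add2r gtn_eqF.
rewrite HS [in RHS]big_nat_recl // addn0 andbF expr0 mul1r addrC; congr (_ + _).
rewrite mulr_sumr; apply: eq_bigr => t _.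
by rewrite mulrA -signr_addb addSnnS /=; case: (b); case: (odd t).
Qed.
End Math.

Local Close Scope ring_scope.
Unset Implicit Arguments.

Theorem lemma4p6 (K : numClosedFieldType) (n : nat) (hn : (0 < n)%N) :
  piEq n (sergeev K n n false n 1) (zel K n) /\
  piEq n (sergeev K n n true n 1) (H0 K n).
Proof.
have key : forall b, inLeftIdeal n (ncsub (sergeev K n n b n 1)
   (ncsum n (fun i => ncscale (sgn K (b && odd i.-1)) (ncgen K (b, i, i))))).
  move=> b; apply: Irel_link; rewrite phi_sub.
  have h1 : inr n 1 by rewrite /inr /= hn.
  have h2 : inr n (1 + n.-1) by rewrite /inr add1n prednK // leqnn hn.
  have := @Dall K n (n.-1) b 1 h1 h2; rewrite add1n prednK //.
  rewrite /eqI /sergeev -/(T K n n.-1 b n 1) => H.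
  suff -> : phi (ncsum n (fun i => ncscale (sgn K (b && odd i.-1)) (ncgen K (b, i, i)))) =
    (\sum_(0 <= t < n) (-1) ^+ (b && odd t) * X K b (1 + t) (1 + t))%R by [].
  rewrite /ncsum phi_big big_add1 /=.
  apply: eq_bigr => t _.
  by rewrite mulr1 phi_single /sgn cst_sign add1n.
split.
  have := key false; congr (inLeftIdeal n (ncsub _ _)).
  rewrite /zel; congr (\big[_/_]_(_ <= _ < _) _); apply: funext => i.
  by rewrite /= /ncscale /ncgen /ncword /= mul1r.
have := key true; congr (inLeftIdeal n (ncsub _ _)).
Qed.
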